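(* For any bisimulation congruence $(C_1,C_2)$ on $(\Sigma^\ast,\Sigma^{\ast+})$, we have $(C_1,C_2)=T(M(C_1,C_2))$, where $M(C_1,C_2)$ is the pointed lasso automaton $(\Sigma^\ast/C_1,\Sigma^{\ast+}/C_2,[\epsilon]_{C_1},\sigma_1,\sigma_2,\sigma_3)$ with $\sigma_1([w])(a)=[wa]$, $\sigma_2([w])(a)=[(w,a)]$, $\sigma_3([(u,v)])(a)=[(u,va)]$, and $T$ of a pointed lasso automaton is $(\ker\delta_1^\sharp,\ker\delta^\sharp)$.
   Context: $\Sigma$ is a finite alphabet, $\Sigma^{\ast+}=\Sigma^\ast\times\Sigma^+$ the lassos. A pointed lasso automaton is $(X_1,X_2,\overline{x},\delta_1,\delta_2,\delta_3)$ with disjoint $X_1,X_2$, $\overline{x}\in X_1$, $\delta_1:X_1\times\Sigma\to X_1$, $\delta_2:X_1\times\Sigma\to X_2$, $\delta_3:X_2\times\Sigma\to X_2$; extend $\delta_1,\delta_3$ to words, set $\delta_\circ(x,av)=\delta_3(\delta_2(x,a),v)$ for $x\in X_1$ and $\delta(x,(u,v))=\delta_\circ(\delta_1(x,u),v)$. $\ker\delta_1^\sharp=\{(u,v)\mid\forall x\in X_1:\delta_1(x,u)=\delta_1(x,v)\}$, $\ker\delta^\sharp=\{((u,v),(u',v'))\mid\forall x\in X_1:\delta(x,(u,v))=\delta(x,(u',v'))\}$. A bisimulation congruence is a pair $(C_1,C_2)$ of equivalence relations on $\Sigma^\ast$ and $\Sigma^{\ast+}$ such that: $C_1$ is a monoid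 congruence on $\Sigma^\ast$; $(w,w')\in C_1$ and $((u,v),(u',v'))\in C_2$ imply $((wu,v),(w'u',v'))\in C_2$; $(u,u')\in C_1$ implies $(ua,u'a)\in C_1$ and $((u,a),(u',a))\in C_2$; $((u,v),(u',v'))\in C_2$ implies $((u,va),(u',v'a))\in C_2$ (these conditions make $M(C_1,C_2)$ well defined). *)

(* Defs.v *)
From mathcomp Require Import ssreflect ssrfun ssrbool eqtype ssrnat seq choice fintype.
From Stdlib Require Import ClassicalEpsilon.
Set Implicit Arguments. Unset Strict Implicit. Unset Printing Implicit Defensive.

Section Lassos.
Variable S : finType.

Definition neword := {v : seq S | v != [::]}.
Definition ne_single (a : S) : neword := exist _ [:: a] isT.
Lemma rcons_neq_nil (v : seq S) (a : S) : rcons v a != [::].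
Proof. by case: v. Qed.
Definition ne_snoc (v : neword) (a : S) : neword :=
  exist _ (rcons (sval v) a) (rcons_neq_nil (sval v) a).

Definition lasso := (seq S * neword)%type.

(* pointed lasso automata (disjointness of X1, X2 is automatic: distinct types) *)
Record plauto := PLAuto {
  X1 : Type; X2 : Type; xbar : X1;
  d1 : X1 -> S -> X1; d2 : X1 -> S -> X2; d3 : X2 -> S -> X2 }.

Definition d1w (A : plauto) (x : X1 A) (u : seq S) : X1 A := foldl (d1 (p:=A)) x u.
Definition d3w (A : plauto) (y : X2 A) (u : seq S) : X2 A := foldl (d3 (p:=A)) y u.

(* delta_circ (x, a v) = delta_3 (delta_2 (x, a), v) *)
Definition dcirc (A : plauto) (x : X1 A) (v : neword) : X2 A :=
  match sval v as s return s != [::] -> X2 A with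
  | [::] => fun H => False_rect _ (Bool.diff_false_true H)
  | a :: v' => fun _ => d3w (d2 x a) v'
  end (svalP v).

Definition delta (A : plauto) (x : X1 A) (l : lasso) : X2 A := dcirc (d1w x l.1) l.2.

Definition ker_d1 (A : plauto) (u v : seq S) : Prop :=
  forall x : X1 A, d1w x u = d1w x v.
Definition ker_d (A : plauto) (l l' : lasso) : Prop :=
  forall x : X1 A, delta x l = delta x l'.

Definition T (A : plauto) := (ker_d1 A, ker_d A).

Definition equivalence {X : Type} (R : X -> X -> Prop) :=
  (forall x, R x x) /\ (forall x y, R x y -> R y x) /\
  (forall x y z, R x y -> R y z -> R x z).

Definition bisim_congruence (C1 : seq S -> seq S -> Prop)
    (C2 : lasso -> lasso -> Prop) : Prop :=
  equivalence C1 /\ equivalence C2 /\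
      (forall u u' v v', C1 u u' -> C1 v v' -> C1 (u ++ v) (u' ++ v')) /\
      (forall w w' u v u' v', C1 w w' -> C2 (u, v) (u', v') ->
          C2 (w ++ u, v) (w' ++ u', v')) /\
      (forall u u' a, C1 u u' ->
          C1 (rcons u a) (rcons u' a) /\ C2 (u, ne_single a) (u', ne_single a)) /\
      (forall u v u' v' a, C2 (u, v) (u', v') -> C2 (u, ne_snoc v a) (u', ne_snoc v' a)).

End Lassos.

Definition quot (X : Type) (R : X -> X -> Prop) := {P : X -> Prop | exists x, P = R x}.
Definition cls (X : Type) (R : X -> X -> Prop) (x : X) : quot R :=
  exist _ (R x) (ex_intro _ x erefl).
Definition repr_q (X : Type) (R : X -> X -> Prop) (P : quot R) : X :=
  proj1_sig (constructive_indefinite_description _ (proj2_sig P)).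

Definition M (S : finType) (C1 : seq S -> seq S -> Prop)
    (C2 : lasso S -> lasso S -> Prop) : plauto S :=
  @PLAuto S (quot C1) (quot C2) (cls C1 [::])
    (fun P a => cls C1 (rcons (repr_q P) a))
    (fun P a => cls C2 (repr_q P, ne_single a))
    (fun Q a => cls C2 ((repr_q Q).1, ne_snoc (repr_q Q).2 a)).

(* Main.v *)
Require Import Defs.
From mathcomp Require Import all_boot.
From Stdlib Require Import ClassicalEpsilon FunctionalExtensionality PropExtensionality ProofIrrelevance.

Section H.
Variable X : Type.
Variable R : X -> X -> Prop.
Hypothesis eqR : equivalence R.

Lemma cls_eq x y : R x y -> cls R x = cls R y.
Proof.
move=> H; case: eqR => [r [s t]].
have E : R x = R y.
  apply: functional_extensionality => z; apply: propositional_extensionality.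
  split => [Hz|Hz]; [exact: t (s _ _ H) Hz| exact: t H Hz].
rewrite /cls; move: (ex_intro _ x _) (ex_intro _ y _); rewrite E => p q.
by rewrite (proof_irrelevance _ p q).
Qed.

Lemma cls_inv x y : cls R x = cls R y -> R x y.
Proof.
move=> H; have: R x = R y by move: (f_equal (@proj1_sig _ _) H).
case: eqR => [r [s t]] E; apply: s; rewrite -E; exact: r.
Qed.

Lemma repr_cls x : R x (repr_q (cls R x)).
Proof.
rewrite /repr_q; case: constructive_indefinite_description => r /= E.
case: eqR => [rf _]; rewrite E; exact: rf.
Qed.

Lemma cls_surj (P : quot R) : exists x, P = cls R x.
Proof.
case: P => P [x E]; exists x; subst P; rewrite /cls.
f_equal; exact: proof_irrelevance.
Qed.
End H.

Theorem mainTheorem13 (S : finType) (C1 : seq S -> seq S -> Prop)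
    (C2 : lasso S -> lasso S -> Prop) :
  bisim_congruence C1 C2 -> (C1, C2) = T (M C1 C2).
Proof.
move=> [e1 [e2 [hcat [hw [hr hs]]]]].
have [r1 [s1 t1]] := e1.
have [r2 [s2 t2]] := e2.
have D1 : forall u w, d1w (A:=M C1 C2) (cls C1 w) u = cls C1 (w ++ u).
  elim=> [|a u IH] w; first by rewrite cats0.
  rewrite /d1w /= -/(d1w _ _).
  have -> : cls C1 (rcons (repr_q (cls C1 w)) a) = cls C1 (rcons w a).
    apply: cls_eq => //; apply: (proj1 (hr _ _ a _)); apply: s1; exact: repr_cls.
  rewrite -cat_rcons; exact: IH.
have D3 : forall v' u V, exists W : neword S, sval W = sval V ++ v' /\
    d3w (A:=M C1 C2) (cls C2 (u, V)) v' = cls C2 (u, W).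
  elim=> [|a v' IH] u V; first by exists V; rewrite cats0.
  rewrite /d3w /= -/(d3w _ _).
  have -> : cls C2 ((repr_q (cls C2 (u, V))).1, ne_snoc (repr_q (cls C2 (u, V))).2 a)
      = cls C2 (u, ne_snoc V a).
    apply: cls_eq => //; have := @repr_cls _ _ e2 (u, V); case: (repr_q _) => r1' r2' H.
    apply: s2; exact: hs H.
  have [W [HW E]] := IH u (ne_snoc V a); exists W; split; last exact: E.
  by rewrite HW /= cat_rcons.
have DD : forall w l, delta (A:=M C1 C2) (cls C1 w) l = cls C2 (w ++ l.1, l.2).
  move=> w [u [[|a v'] Hv]] //.
  rewrite /delta D1 /dcirc /=.
  have -> : cls C2 (repr_q (cls C1 (w ++ u)), ne_single a) = cls C2 (w ++ u, ne_single a).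
    apply: cls_eq => //; apply: (proj2 (hr _ _ a _)); apply: s1; exact: repr_cls.
  have [W [HW ->]] := D3 v' (w ++ u) (ne_single a).
  congr (cls C2 (_, _)); apply: val_inj; exact: HW.
rewrite /T; congr pair.
- apply: functional_extensionality => u; apply: functional_extensionality => v.
  apply: propositional_extensionality; split.
  + move=> H x; have [w ->] := @cls_surj _ _ x; rewrite !D1; apply: cls_eq => //.
    exact: hcat.
  + move=> H; have := H (cls C1 [::]); rewrite !D1 /=; exact: cls_inv.
- apply: functional_extensionality => l; apply: functional_extensionality => l'.
  apply: propositional_extensionality; split.
  + move=> H x; have [w ->] := @cls_surj _ _ x; rewrite !DD; apply: cls_eq => //.
    case: l l' H => [u v] [u' v'] H; exact: hw.
  + move=> H; have := H (cls C1 [::]); rewrite !DD /=; case: l {H} => ? ?; case: l' => ? ? /=.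
    exact: cls_inv.
Qed.
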